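(* Let $J\in\{1,\dots,N-1\}$ be the index with $\lambda_J\le\lambda_{\rm avg}<\lambda_{J+1}$. Let $K\in\{1,\dots,J\}$ and let $h$ be a graph filter with $h(\lambda_n)\ne 0$ for $n=1,\dots,K$, and define $$\eta_K=\frac{\max\{|h(\lambda_{K+1})|,\dots,|h(\lambda_N)|\}}{\min\{|h(\lambda_1)|,\dots,|h(\lambda_K)|\}} .$$ If $$\eta_K^2<\frac{\sum_{n=1}^K(\lambda_n-\lambda_{\rm avg})}{\sum_{n=1}^J(\lambda_n-\lambda_{\rm avg})},$$ then $h$ is a smooth graph filter, i.e. $r(h)<1$. (In particular, for $K=J$, every graph filter with $\eta_J<1$ is smooth.)
   Context: Let $\mathcal G$ be an undirected, weighted, connected graph on $N\ge 2$ nodes with symmetric weighted adjacency matrix $W\in\mathbb R^{N\times N}$, $W_{k,n}\ge 0$. Its Laplacian is $L=\mathrm{diag}(W\mathbf 1)-W$, with eigendecomposition $L=V\,\mathrm{diag}(\lambda_1,\dots,\lambda_N)\,V^T$, $V$ orthogonal, and eigenvalues ordered $0=\lambda_1\le\lambda_2\le\cdots\le\lambda_N$ (connectedness gives $\lambda_2>0$). Put $\lambda_{\rm avg}=\frac1N\sum_{n=1}^N\lambda_n$. A graph filter is a real function $h$ on the eigenvalues, satisfying $h(\lambda_m)=h(\lambda_k)$ whenever $\lambda_m=\lambda_k$, acting as the matrix $h(L)=V\,\mathrm{diag}(h(\lambda_1),\dots,h(\lambda_N))\,V^T$. For a graph filter with $h(\lambda_n)$ not all zero, its smoothness ratio is $r(h)=\lambda_{\rm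 avg}^{-1}\sum_n\lambda_n h^2(\lambda_n)/\sum_n h^2(\lambda_n)$, and $h$ is called a smooth graph filter if $r(h)<1$. A graph filter with $\eta_K<1$ is called a graph low-pass filter of order $K$. *)

(* Defs.v *)
From HB Require Import structures.
From mathcomp Require Import all_boot all_order all_algebra.
Set Implicit Arguments. Unset Strict Implicit. Unset Printing Implicit Defensive.
Import Order.TTheory GRing.Theory Num.Theory.
Local Open Scope ring_scope.

(* Eigenvalues are indexed 1-based: lam n for n = 1..N. *)

Definition laplacian (R : realFieldType) (N : nat) (W : 'M[R]_N) : 'M[R]_N :=
  diag_mx (\row_k (\sum_n W k n)) - W.

Definition graph_connected (R : realFieldType) (N : nat) (W : 'M[R]_N) : Prop :=
  forall i j : 'I_N, connect (fun a b : 'I_N => 0 < W a b) i j.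

Definition lam_avg (R : realFieldType) (N : nat) (lam : nat -> R) : R :=
  (\sum_(1 <= n < N.+1) lam n) / N%:R.

Definition smooth_ratio (R : realFieldType) (N : nat) (lam : nat -> R)
  (h : R -> R) : R :=
  (lam_avg N lam)^-1 *
  ((\sum_(1 <= n < N.+1) lam n * (h (lam n)) ^+ 2) /
   (\sum_(1 <= n < N.+1) (h (lam n)) ^+ 2)).

Definition smooth_filter (R : realFieldType) (N : nat) (lam : nat -> R)
  (h : R -> R) : Prop :=
  (exists n, (1 <= n <= N)%N /\ h (lam n) != 0) /\ smooth_ratio N lam h < 1.

Definition eta_K (R : realFieldType) (N K : nat) (lam : nat -> R) (h : R -> R) : R :=
  (\big[Num.max/0]_(K.+1 <= n < N.+1) `|h (lam n)|) /
  (\big[Num.min/ `|h (lam 1%N)|]_(1 <= n < K.+1) `|h (lam n)|).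

(* Main.v *)
Require Import Defs.
From HB Require Import structures.
From mathcomp Require Import all_boot all_order all_algebra.
From mathcomp Require Import lra zify.
Import Order.TTheory GRing.Theory Num.Theory.
Local Open Scope ring_scope.

Lemma bigmax_ge_nat (R : realFieldType) (F : nat -> R) m n i :
  (m <= i < n)%N -> F i <= \big[Num.max/0]_(m <= j < n) F j.
Proof.
move=> /andP[mi iN].
apply: (le_trans _ (le_bigmax_nat xpredT F mi iN)).
by rewrite big_nat1_id le_max lexx.
Qed.

Lemma bigmin_le_nat (R : realFieldType) (F : nat -> R) x m n i :
  (m <= i < n)%N -> \big[Num.min/x]_(m <= j < n) F j <= F i.
Proof.
move=> /andP[mi iN].
apply: (le_trans (le_bigmin_nat (x0:=x) xpredT F mi iN)).
by rewrite big_nat1_id ge_min lexx.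
Qed.

Lemma bigmin_gt0_nat (R : realFieldType) (F : nat -> R) x m n :
  0 < x -> (forall i, (m <= i < n)%N -> 0 < F i) ->
  0 < \big[Num.min/x]_(m <= j < n) F j.
Proof.
move=> x0 H; rewrite big_nat_cond.
apply: (big_ind (fun y => 0 < y)) => //.
  by move=> y z y0 z0; rewrite lt_min y0 z0.
by move=> i /andP[Hi _]; apply: H.
Qed.

Theorem claim1 (R : realFieldType) (N : nat) (W V : 'M[R]_N) (lam : nat -> R)
  (h : R -> R) (J K : nat) :
  (2 <= N)%N ->
  W^T = W ->
  (forall k n : 'I_N, 0 <= W k n) ->
  graph_connected W ->
  V *m V^T = 1%:M ->
  laplacian W = V *m diag_mx (\row_(i < N) lam i.+1) *m V^T ->
  (forall m n : nat, (1 <= m)%N -> (m <= n)%N -> (n <= N)%N -> lam m <= lam n) ->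
  (1 <= J <= N.-1)%N ->
  lam J <= lam_avg N lam < lam J.+1 ->
  (1 <= K <= J)%N ->
  (forall n : nat, (1 <= n <= K)%N -> h (lam n) != 0) ->
  (eta_K N K lam h) ^+ 2 <
    (\sum_(1 <= n < K.+1) (lam n - lam_avg N lam)) /
    (\sum_(1 <= n < J.+1) (lam n - lam_avg N lam)) ->
  smooth_filter N lam h.
Proof.
move=> N2 _ W0 _ HV HL Hmono /andP[J1 JN] /andP[HJa HaJ] /andP[K1 KJ] hK Heta.
set a := lam_avg N lam in HJa HaJ Heta *.
have N0 : (0 < N)%N by apply: leq_trans N2.
have sumd : \sum_(1 <= n < N.+1) (lam n - a) = 0.
  rewrite sumrB sumr_const_nat subSS subn0 /a /lam_avg -[X in _ - X]mulr_natr mulfVK ?subrr //.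
  by rewrite pnatr_eq0 -lt0n.
have tr : \tr (laplacian W) = \sum_(1 <= n < N.+1) lam n.
  rewrite HL mxtrace_mulC mulmxA (mulmx1C HV) mul1mx mxtrace_diag big_add1 /=.
  by rewrite big_mkord; apply: eq_bigr => i _; rewrite mxE.
have a0 : 0 <= a.
  rewrite /a /lam_avg -tr divr_ge0 ?ler0n //.
  rewrite /mxtrace sumr_ge0 // => i _.
  rewrite !mxE eqxx mulr1n subr_ge0 (bigD1 i) //= lerDl.
  by apply: sumr_ge0 => j _; apply: W0.
split.
  have KN : (K <= N)%N by apply: leq_trans KJ (leq_trans JN (leq_pred N)).
  exists 1%N; split; first by rewrite /= (leq_trans K1 KN).
  by apply: hK; rewrite leqnn K1.
rewrite /smooth_ratio -/a.
move: a0; rewrite le0r => /orP[/eqP ->|apos]; first by rewrite invr0 mul0r ltr01.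
have JltN : (J < N)%N by lia.
have KN : (K < N)%N by lia.
have hpos : forall n, (1 <= n <= K)%N -> 0 < `|h (lam n)| by move=> n Hn; rewrite normr_gt0 hK.
set m := \big[Num.min/ `|h (lam 1%N)|]_(1 <= n < K.+1) `|h (lam n)|.
set M := \big[Num.max/0]_(K.+1 <= n < N.+1) `|h (lam n)|.
have mpos : 0 < m.
  apply: bigmin_gt0_nat; first by apply: hpos; rewrite leqnn K1.
  by move=> i Hi; apply: hpos; rewrite -ltnS.
have M0 : 0 <= M by apply: (le_trans (normr_ge0 (h (lam N)))); apply: bigmax_ge_nat; rewrite KN ltnSn.
have hm : forall n, (1 <= n < K.+1)%N -> m ^+ 2 <= h (lam n) ^+ 2.
  move=> n Hn; rewrite -(real_normK (num_real (h (lam n)))) !expr2.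
  have := @bigmin_le_nat _ (fun n => `|h (lam n)|) `|h (lam 1%N)| _ _ _ Hn => /= Hle.
  by apply: ler_pM => //; apply: ltW.
have hM : forall n, (K.+1 <= n < N.+1)%N -> h (lam n) ^+ 2 <= M ^+ 2.
  move=> n Hn; rewrite -(real_normK (num_real (h (lam n)))) !expr2.
  have := @bigmax_ge_nat _ (fun n => `|h (lam n)|) _ _ _ Hn => /= Hle.
  by apply: ler_pM.
have dneg : forall n, (1 <= n < J.+1)%N -> lam n - a <= 0.
  move=> n /andP[n1 nJ]; rewrite subr_le0; apply: le_trans HJa; apply: Hmono => //; lia.
have dpos : forall n, (J.+1 <= n < N.+1)%N -> 0 <= lam n - a.
  move=> n /andP[n1 nJ]; rewrite subr_ge0; apply: ltW; apply: lt_le_trans HaJ _; apply: Hmono => //; lia.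
have S2pos : 0 < \sum_(1 <= n < N.+1) h (lam n) ^+ 2.
  rewrite big_ltn ?ltnS //.
  have e1 : 0 < h (lam 1%N) ^+ 2 by rewrite exprn_even_gt0 // hK // leqnn K1.
  have e2 : 0 <= \sum_(2 <= i < N.+1) h (lam i) ^+ 2 by apply: sumr_ge0 => i _; apply: sqr_ge0.
  lra.
rewrite mulrC ltr_pdivrMr // mul1r ltr_pdivrMr // -subr_lt0 mulr_sumr -sumrB.
under eq_bigr => n _ do rewrite -mulrBl.
have f1 : (K < N.+1)%N by lia.
have f2 : (K < J.+1)%N by lia.
have f3 : (J < N.+1)%N by lia.
rewrite (@big_cat_nat _ _ _ K.+1 1 N.+1) //= (@big_cat_nat _ _ _ J.+1 K.+1 N.+1) //=.
move: sumd; rewrite (@big_cat_nat _ _ _ J.+1 1 N.+1) //= (@big_cat_nat _ _ _ K.+1 1 J.+1) //= => sumd.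
move: Heta; rewrite (@big_cat_nat _ _ _ K.+1 1 J.+1) //= => Heta.
set Q := \sum_(1 <= n < K.+1) (lam n - a) in Heta sumd *.
set Q2 := \sum_(K.+1 <= n < J.+1) (lam n - a) in Heta sumd.
set P := \sum_(J.+1 <= n < N.+1) (lam n - a) in sumd.
have B1 : \sum_(1 <= n < K.+1) (lam n - a) * h (lam n) ^+ 2 <= Q * m ^+ 2.
  rewrite /Q mulr_suml; apply: ler_sum_nat => n Hn.
  apply: ler_wnM2l; last by apply: hm.
  by apply: dneg; lia.
have B2 : \sum_(K.+1 <= n < J.+1) (lam n - a) * h (lam n) ^+ 2 <= 0.
  rewrite big_nat_cond; apply: sumr_le0 => n /andP[Hn _].
  apply: mulr_le0_ge0; last by apply: sqr_ge0.
  by apply: dneg; lia.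
have B3 : \sum_(J.+1 <= n < N.+1) (lam n - a) * h (lam n) ^+ 2 <= P * M ^+ 2.
  rewrite /P mulr_suml; apply: ler_sum_nat => n Hn.
  apply: ler_wpM2l; first by apply: dpos.
  by apply: hM; lia.
have Q0 : Q <= 0.
  rewrite /Q big_nat_cond; apply: sumr_le0 => n /andP[Hn _].
  by apply: dneg; lia.
have Q20 : Q2 <= 0.
  rewrite /Q2 big_nat_cond; apply: sumr_le0 => n /andP[Hn _].
  by apply: dneg; lia.
have HP : P = - (Q + Q2) by lra.
have m2pos : 0 < m ^+ 2 by apply: exprn_gt0.
have Hfin : Q * m ^+ 2 < M ^+ 2 * (Q + Q2).
  move: Heta; rewrite /eta_K -/m -/M expr_div_n.
  have : Q + Q2 <= 0 by lra.
  rewrite le_eqVlt => /orP[/eqP T0 | Tneg].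
    rewrite T0 invr0 mulr0 => H; exfalso.
    have : 0 <= M ^+ 2 / m ^+ 2 by apply: divr_ge0; apply: sqr_ge0.
    lra.
  by rewrite ltr_ndivlMr // mulrAC ltr_pdivlMr.
rewrite HP mulNr [_ * M ^+ 2]mulrC in B3.
apply: (le_lt_trans (lerD B1 (lerD B2 B3))).
by rewrite add0r subr_lt0.
Qed.
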